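(* Suppose $V \models \mathsf{ZF}^- + \mathsf{DC}_\mu$-Scheme, where $\mu$ is an infinite cardinal. Then for any proper class $\mathcal{C}$ definable (with parameters) over $V$, there is a subset $b \subseteq \mathcal{C}$ of cardinality $\mu$.
   Context: $\mathsf{ZF}^-$ denotes $\mathsf{ZF}$ without Power Set, with the Collection Scheme (plus Empty Set, Extensionality, Pairing, Union, Infinity, Foundation, Separation and Replacement Schemes). For an infinite cardinal $\mu$, the $\mathsf{DC}_\mu$-Scheme is the scheme: for all formulas $\varphi,\psi$ and sets $u,w$, if there is $y$ with $\psi(y,u)$ and for every $\alpha < \mu$ and every sequence $s = \langle x_\beta : \beta < \alpha\rangle$ with $\psi(x_\beta,u)$ for all $\beta$ there is $z$ with $\psi(z,u)$ and $\varphi(s,z,w)$, then there is a function $f$ with domain $\mu$ such that for each $\alpha < \mu$, $\psi(f(\alpha),u)$ and $\varphi(f\restriction\alpha, f(\alpha), w)$. *)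

(* Defs.v *)
(* First-order language of set theory {∈}, Tarskian
   satisfaction in a structure (M, E), and the axioms of ZF^- (with
   Collection) and the DC_mu scheme, stated as meta-level properties of the
   structure (single axioms semantically, schemes by quantifying over
   formulas). *)

Inductive form : Type :=
| FMem : nat -> nat -> form
| FEq  : nat -> nat -> form
| FBot : form
| FImp : form -> form -> form
| FAnd : form -> form -> form
| FOr  : form -> form -> form
| FAll : form -> form                (* binds de Bruijn variable 0 *)
| FEx  : form -> form.

Definition scons {M : Type} (x : M) (env : nat -> M) : nat -> M :=
  fun n => match n with 0 => x | S k => env k end.

Fixpoint sat {M : Type} (E : M -> M -> Prop) (env : nat -> M) (f : form) : Prop :=
  match f with
  | FMem i j => E (env i) (env j)
  | FEq i j => env i = env j
  | FBot => False
  | FImp a b => sat E env a -> sat E env b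
  | FAnd a b => sat E env a /\ sat E env b
  | FOr a b => sat E env a \/ sat E env b
  | FAll a => forall x, sat E (scons x env) a
  | FEx a => exists x, sat E (scons x env) a
  end.

Section SetNotions.
Variables (M : Type) (E : M -> M -> Prop).

Definition ax_ext := forall a b, (forall z, E z a <-> E z b) -> a = b.
Definition ax_empty := exists e, forall z, ~ E z e.
Definition ax_pair := forall a b, exists c, forall z, E z c <-> (z = a \/ z = b).
Definition ax_union := forall a, exists u, forall z, E z u <-> exists y, E y a /\ E z y.
Definition ax_infinity := exists x,
  (exists e, E e x /\ forall z, ~ E z e) /\
  (forall y, E y x -> exists s, E s x /\ forall z, E z s <-> (E z y \/ z = y)).
Definition ax_foundation := forall x, (exists y, E y x) ->
  exists y, E y x /\ ~ exists z, E z y /\ E z x.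
Definition sch_separation := forall (phi : form) (env : nat -> M) a,
  exists b, forall z, E z b <-> (E z a /\ sat E (scons z env) phi).
Definition sch_replacement := forall (phi : form) (env : nat -> M) a,
  (forall x, E x a -> exists! y, sat E (scons y (scons x env)) phi) ->
  exists b, forall x, E x a -> exists y, E y b /\ sat E (scons y (scons x env)) phi.
Definition sch_collection := forall (phi : form) (env : nat -> M) a,
  (forall x, E x a -> exists y, sat E (scons y (scons x env)) phi) ->
  exists b, forall x, E x a -> exists y, E y b /\ sat E (scons y (scons x env)) phi.

Definition ZFminus : Prop :=
  ax_ext /\ ax_empty /\ ax_pair /\ ax_union /\ ax_infinity /\ ax_foundation /\
  sch_separation /\ sch_replacement /\ sch_collection.

Definition is_upair (u a b : M) := forall z, E z u <-> (z = a \/ z = b).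
(* Kuratowski pair p = {{a},{a,b}} *)
Definition is_opair (p a b : M) :=
  exists u v, is_upair u a a /\ is_upair v a b /\ is_upair p u v.
Definition is_function (f : M) :=
  (forall p, E p f -> exists a b, is_opair p a b) /\
  (forall p p' a b b', E p f -> E p' f -> is_opair p a b -> is_opair p' a b' -> b = b').
Definition app (f a b : M) := exists p, E p f /\ is_opair p a b.
Definition has_dom (f d : M) := forall a, E a d <-> exists b, app f a b.
Definition is_restriction (f d s : M) :=
  forall p, E p s <-> (E p f /\ exists a b, is_opair p a b /\ E a d).
Definition is_bijection (f a b : M) :=
  is_function f /\ has_dom f a /\
  (forall x y, app f x y -> E y b) /\
  (forall y, E y b -> exists x, app f x y) /\
  (forall x x' y, app f x y -> app f x' y -> x = x').

Definition transitive (x : M) := forall y z, E z y -> E y x -> E z x.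
Definition is_ordinal (x : M) :=
  transitive x /\ (forall y, E y x -> transitive y) /\
  (forall y z, E y x -> E z x -> E y z \/ y = z \/ E z y).
Definition is_empty (x : M) := forall z, ~ E z x.
Definition is_succ_of (s y : M) := forall z, E z s <-> (E z y \/ z = y).
Definition is_limit (x : M) :=
  is_ordinal x /\ ~ is_empty x /\ forall y, E y x -> exists s, E s x /\ is_succ_of s y.
Definition is_omega (w : M) := is_limit w /\ forall y, E y w -> ~ is_limit y.

Definition is_cardinal (mu : M) :=
  is_ordinal mu /\ forall alpha f, E alpha mu -> ~ is_bijection f alpha mu.
Definition is_infinite_cardinal (mu : M) :=
  is_cardinal mu /\ exists w, is_omega w /\ (E w mu \/ w = mu).

Definition has_card (b mu : M) := exists f, is_bijection f mu b.

(* DC_mu scheme: psi has free variable 0 (= y), phi has free variables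
   0 (= s) and 1 (= z); remaining variables are parameters from env. *)
Definition DC_scheme (mu : M) : Prop :=
  forall (phi psi : form) (env : nat -> M),
    (exists y, sat E (scons y env) psi) ->
    (forall alpha s, E alpha mu -> is_function s -> has_dom s alpha ->
       (forall beta x, app s beta x -> sat E (scons x env) psi) ->
       exists z, sat E (scons z env) psi /\ sat E (scons s (scons z env)) phi) ->
    exists f, is_function f /\ has_dom f mu /\
      forall alpha, E alpha mu ->
        exists x s, app f alpha x /\ is_restriction f alpha s /\
          sat E (scons x env) psi /\ sat E (scons s (scons x env)) phi.

Definition proper_class (theta : form) (env : nat -> M) : Prop :=
  ~ exists c, forall y, E y c <-> sat E (scons y env) theta.

End SetNotions.

(* Main.v *)
Require Import Defs.
From Stdlib Require Import Classical.

Definition upairF (w c d : nat) : form :=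
  FAll (FAnd (FImp (FMem 0 (S w)) (FOr (FEq 0 (S c)) (FEq 0 (S d))))
             (FImp (FOr (FEq 0 (S c)) (FEq 0 (S d))) (FMem 0 (S w)))).

Lemma upairF_sat M (E : M -> M -> Prop) env w c d :
  sat E env (upairF w c d) <-> is_upair M E (env w) (env c) (env d).
Proof.
  unfold upairF, is_upair; simpl; split; intros H z; specialize (H z);
  destruct H as [H1 H2]; split; auto.
Qed.

Opaque upairF.
(* env: 0 = y, 1 = f *)
Definition appF : form :=
  FEx (FEx (FAnd (FMem 0 3)
    (FEx (FEx (FAnd (upairF 1 3 3) (FAnd (upairF 0 3 4) (upairF 2 1 0))))))).

Lemma appF_sat M (E : M -> M -> Prop) env y f :
  sat E (scons y (scons f env)) appF <-> exists a, app M E f a y.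
Proof.
  unfold appF, app, is_opair. simpl. split.
  - intros [a [p [Hp [u [v [H1 [H2 H3]]]]]]].
    apply upairF_sat in H1; apply upairF_sat in H2; apply upairF_sat in H3.
    simpl in *. exists a, p. split; auto. exists u, v. auto.
  - intros [a [p [Hp [u [v [H1 [H2 H3]]]]]]].
    exists a, p. split; auto. exists u, v.
    split; [apply upairF_sat|split; apply upairF_sat]; simpl; auto.
Qed.

(* env: 0 = s, 1 = z *)
Definition phiF : form :=
  FImp (FEx (FAnd (FMem 0 1) (FEx (FAnd (FMem 0 1) (FMem 3 0))))) FBot.

Lemma phiF_sat M (E : M -> M -> Prop) env s z :
  sat E (scons s (scons z env)) phiF <->
  ~ exists p, E p s /\ exists u, E u p /\ E z u.
Proof. simpl. tauto. Qed.

Theorem theorem6p4 (M : Type) (E : M -> M -> Prop) (mu : M) :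
  ZFminus M E ->
  is_infinite_cardinal M E mu ->
  DC_scheme M E mu ->
  forall (theta : form) (env : nat -> M),
    proper_class M E theta env ->
    exists b, (forall y, E y b -> sat E (scons y env) theta) /\ has_card M E b mu.
Proof.
  intros [Hext [Hempty [Hpair [Hunion [Hinf [Hfound [Hsep [Hrep Hcol]]]]]]]]
    [[[Htr [Htr2 Htri]] _] _] HDC theta env Hprop.
  assert (Hout : forall s, exists z, sat E (scons z env) theta /\
     ~ exists p, E p s /\ exists u, E u p /\ E z u).
  { intros s. destruct (Hunion s) as [U1 HU1]. destruct (Hunion U1) as [U2 HU2].
    destruct (Hsep theta env U2) as [c Hc].
    apply NNPP; intros Hno. apply Hprop. exists c. intros y. rewrite Hc.
    split; [tauto|]. intros Hy. split; auto.
    apply NNPP; intros HyU. apply Hno. exists y. split; auto.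
    intros [p [Hp [u [Hu Hyu]]]]. apply HyU. apply HU2. exists u. split; auto.
    apply HU1. exists p; auto. }
  destruct (HDC phiF theta env) as [f [Hf [Hdom Hval]]].
  { destruct (Hout mu) as [z [Hz _]]. exists z; exact Hz. }
  { intros alpha s _ _ _ _. destruct (Hout s) as [z [Hz Hn]]. exists z.
    split; [exact Hz|]. apply phiF_sat; exact Hn. }
  destruct (Hunion f) as [U1 HU1]. destruct (Hunion U1) as [U2 HU2].
  destruct (Hsep appF (scons f env) U2) as [b Hb].
  assert (Hinb : forall a y, app M E f a y -> E y b).
  { intros a y Hay. apply Hb. split.
    - destruct Hay as [p [Hp [u [v [H1 [H2 H3]]]]]].
      apply HU2. exists v. split; [apply HU1; exists p; split; auto; apply H3; auto|].
      apply H2; auto.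
    - apply appF_sat. eauto. }
  assert (Hth : forall a y, app M E f a y -> sat E (scons y env) theta).
  { intros a y Hay. assert (Ha : E a mu) by (apply Hdom; eauto).
    destruct (Hval a Ha) as [x [s [Hax [_ [Hx _]]]]].
    destruct Hf as [_ Hfun].
    destruct Hay as [p [Hp Hop]]. destruct Hax as [p' [Hp' Hop']].
    rewrite (Hfun p p' a y x Hp Hp' Hop Hop'). exact Hx. }
  exists b. split.
  - intros y Hy. apply Hb in Hy. destruct Hy as [_ Hy]. apply appF_sat in Hy.
    destruct Hy as [a Ha]. eauto.
  - exists f. unfold is_bijection. split; [exact Hf|]. split; [exact Hdom|].
    split; [exact Hinb|]. split.
    + intros y Hy. apply Hb in Hy. destruct Hy as [_ Hy]. apply appF_sat in Hy. exact Hy.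
    +
      assert (Hlt : forall x x' y, E x x' -> E x' mu -> app M E f x y ->
                 app M E f x' y -> False).
      { intros x x' y Hxx' Hx' Hxy Hx'y.
        destruct (Hval x' Hx') as [y0 [s [Hy0 [Hs [_ Hphi]]]]].
        apply phiF_sat in Hphi.
        destruct Hf as [_ Hfun].
        assert (y0 = y).
        { destruct Hy0 as [p [Hp Hop]]. destruct Hx'y as [p' [Hp' Hop']].
          exact (Hfun p p' x' y0 y Hp Hp' Hop Hop'). }
        subst y0. apply Hphi.
        destruct Hxy as [p [Hp Hop]]. exists p. split.
        - apply Hs. split; auto. exists x, y. auto.
        - destruct Hop as [u [v [H1 [H2 H3]]]]. exists v. split.
          + apply H3; auto.
          + apply H2; auto. }
      intros x x' y Hxy Hx'y.
      assert (Hx : E x mu) by (apply Hdom; eauto).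
      assert (Hx' : E x' mu) by (apply Hdom; eauto).
      destruct (Htri x x' Hx Hx') as [H|[H|H]]; auto.
      * exfalso; eauto.
      * exfalso; eauto.
Qed.
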